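(* If $\sigma_2(G)\le\sigma_2(H)$, then for every integer $0\le i\le s-1$, $$\sigma_2\big((I\otimes A_H)\,G_i\,(I\otimes A_H)\big)\le 2\,\sigma_2(H).$$
   Context: $G$ is a $d_1$-regular undirected graph on $[n]$ with normalized adjacency matrix $A_G$ and a locally invertible rotation map $\mathrm{rot}_G$ ($\mathrm{rot}_G(v,j)=(v',j')$ iff $v'$ is the $j$-th neighbour of $v$ and $v$ is the $j'$-th neighbour of $v'$, with $j'=\varphi(j)$ for a fixed bijection $\varphi$ of $[d_1]$). $H$ is a $d_2$-regular undirected graph on $[d_1]^s$ with normalized adjacency matrix $A_H$. $\mathrm{Rot}_i$ sends $(v,(a_0,\dots,a_{s-1}))$ to $(v',(a_0,\dots,a_i',\dots,a_{s-1}))$ where $(v',a_i')=\mathrm{rot}_G(v,a_i)$, and $G_i$ is its permutation matrix on $\mathbb R^{V(G)}\otimes\mathbb R^{V(H)}$. $\sigma_2$ denotes the second largest singular value; $\sigma_2(G)=\sigma_2(A_G)$, $\sigma_2(H)=\sigma_2(A_H)$. *)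

(* Defs.v *)
From HB Require Import structures.
From mathcomp Require Import all_boot all_order all_algebra all_fingroup.
Set Implicit Arguments. Unset Strict Implicit. Unset Printing Implicit Defensive.
Import Order.TTheory GRing.Theory Num.Theory.
Local Open Scope ring_scope.

(* A square real matrix indexed by an arbitrary finite type T, turned into a
   MathComp matrix by enumerating T (singular values do not depend on the
   enumeration). *)
Definition mx_of (R : nzRingType) (T : finType) (f : T -> T -> R) : 'M[R]_#|T| :=
  \matrix_(i, j) f (enum_val i) (enum_val j).

(* s is the list of singular values of M (with multiplicity), sorted
   non-increasingly: the squares of the entries of s are exactly the
   eigenvalues (roots of the characteristic polynomial, with multiplicity)
   of M^T M. *)
Definition singular_values (R : rcfType) (N : nat) (M : 'M[R]_N) (s : seq R) :=
  [/\ sorted (fun x y : R => y <= x) s,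
      all (fun x : R => 0 <= x) s &
      char_poly (M^T *m M) = \prod_(x <- s) ('X - (x ^+ 2)%:P)].

Definition sigma2_of (R : rcfType) (s : seq R) : R := s`_1.

(* Normalized adjacency matrix of the d1-regular graph G on [n] given by its
   rotation map rot : [n] x [d1] -> [n] x [d1]. *)
Definition adjG (R : rcfType) (n d1 : nat) (rot : 'I_n * 'I_d1 -> 'I_n * 'I_d1)
  (v w : 'I_n) : R :=
  #|[set j : 'I_d1 | (rot (v, j)).1 == w]|%:R / d1%:R.

Definition Hvert (d1 s : nat) := {ffun 'I_s -> 'I_d1}.

(* Normalized adjacency matrix of the d2-regular (multi)graph H given by its
   symmetric edge-multiplicity matrix E. *)
Definition adjH (R : rcfType) (d1 s d2 : nat) (E : Hvert d1 s -> Hvert d1 s -> nat)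
  (a b : Hvert d1 s) : R := (E a b)%:R / d2%:R.

Definition Rot (n d1 s : nat) (rot : 'I_n * 'I_d1 -> 'I_n * 'I_d1) (i : 'I_s)
  (x : 'I_n * Hvert d1 s) : 'I_n * Hvert d1 s :=
  let r := rot (x.1, x.2 i) in
  (r.1, [ffun k => if k == i then r.2 else x.2 k]).

Definition Gi (R : rcfType) (n d1 s : nat) (rot : 'I_n * 'I_d1 -> 'I_n * 'I_d1)
  (i : 'I_s) (x y : 'I_n * Hvert d1 s) : R :=
  (Rot rot i x == y)%:R.

Definition IkronH (R : rcfType) (n d1 s d2 : nat) (E : Hvert d1 s -> Hvert d1 s -> nat)
  (x y : 'I_n * Hvert d1 s) : R :=
  (x.1 == y.1)%:R * adjH R d2 E x.2 y.2.

Definition zigzag_i (R : rcfType) (n d1 s d2 : nat) (rot : 'I_n * 'I_d1 -> 'I_n * 'I_d1)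
  (E : Hvert d1 s -> Hvert d1 s -> nat) (i : 'I_s) (x y : 'I_n * Hvert d1 s) : R :=
  \sum_(z : 'I_n * Hvert d1 s) \sum_(w : 'I_n * Hvert d1 s)
     IkronH R d2 E x z * Gi R rot i z w * IkronH R d2 E w y.

(* Main.v *)
Require Import Defs.
From HB Require Import structures.
From mathcomp Require Import all_boot all_order all_algebra all_fingroup.
From mathcomp Require Import sesquilinear spectral.
From mathcomp.real_closed Require Import complex.
From mathcomp Require Import ring lra.
Import Order.TTheory GRing.Theory Num.Theory Num.Def.
Set Implicit Arguments. Unset Strict Implicit. Unset Printing Implicit Defensive.
Local Open Scope ring_scope.

Lemma char_poly_conj (F : comNzRingType) n (P Q D : 'M[F]_n) :
  Q *m P = 1%:M -> char_poly (Q *m D *m P) = char_poly D.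
Proof.
move=> QP; rewrite /char_poly /char_poly_mx.
set Pp := map_mx polyC P; set Qp := map_mx polyC Q.
have QPp : Qp *m Pp = 1%:M by rewrite -map_mxM QP map_scalar_mx.
have -> : 'X%:M - map_mx polyC (Q *m D *m P) =
  Qp *m ('X%:M - map_mx polyC D) *m Pp.
  rewrite !map_mxM mulmxBr mulmxBl -/Pp -/Qp; congr (_ - _).
  by rewrite -mulmxA -scalar_mxC mulmxA QPp mul1mx.
by rewrite !det_mulmx mulrAC -det_mulmx QPp det1 mul1r.
Qed.

Section Spec.
Variable R : rcfType.
Local Notation C := (R[i]).
Local Notation toC := (real_complex R).
Variable N : nat.
Variable S : 'M[R]_N.
Hypothesis Ssym : S^T = S.
Local Notation SC := (map_mx toC S).

Lemma SC_normal : SC \is normalmx.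
Proof.
apply: symmetric_normalmx.
  apply/is_hermitianmxP; rewrite expr0 scale1r map_mx_id //.
  by rewrite map_trmx Ssym.
by apply/mxOverP => i j; rewrite mxE; apply/complex_realP; exists (S i j).
Qed.

Local Open Scope sesquilinear_scope.
Local Notation P := (spectralmx SC).
Local Notation d := (spectral_diag SC).

Lemma PPt : P *m P^t* = 1%:M.
Proof. exact/unitarymxP/spectral_unitarymx. Qed.

Lemma PtP : P^t* *m P = 1%:M.
Proof. exact/mulmx1C/PPt. Qed.

Lemma SCE : SC = P^t* *m diag_mx d *m P.
Proof.
rewrite -invmx_unitary ?spectral_unitarymx //.
exact/orthomx_spectralP/SC_normal.
Qed.

Lemma perm_d (t : seq R) : char_poly S = \prod_(y <- t) ('X - y%:P) ->
  perm_eq [seq d 0 k | k <- enum 'I_N] [seq toC y | y <- t].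
Proof.
move=> cS; apply: prod_XsubC_eq.
have e1 : char_poly SC = \prod_(y <- t) ('X - (toC y)%:P).
  rewrite -map_char_poly cS rmorph_prod; apply: eq_bigr => y _.
  by rewrite rmorphB /= map_polyX map_polyC.
have e2 : char_poly SC = \prod_(k < N) ('X - (d 0 k)%:P).
  have := char_poly_conj (diag_mx d) PtP; rewrite -SCE => ->.
  rewrite char_poly_trig ?diag_mx_is_trig //.
  by apply: eq_bigr => k _; rewrite mxE eqxx mulr1n.
by rewrite !big_map -e1 e2.
Qed.



Lemma tcM m n p (A : 'M[C]_(m, n)) (B : 'M[C]_(n, p)) : (A *m B)^t* = B^t* *m A^t*.
Proof. by rewrite trmx_mul map_mxM. Qed.

Lemma ctP (x : 'rV[C]_N) : (x *m P^t*)^t* = P *m x^t*.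
Proof. by rewrite tcM trmxCK. Qed.

Lemma cPK (x : 'rV[C]_N) : x *m P^t* *m P = x.
Proof. by rewrite -mulmxA PtP mulmx1. Qed.

Lemma entry_conj (x y : 'rV[C]_N) :
  (x *m y^t*) 0 0 = \sum_k x 0 k * (y 0 k)^*.
Proof. by rewrite mxE; apply: eq_bigr => k _; rewrite !mxE. Qed.

Lemma ray_quad (x : 'rV[C]_N) : (x *m SC *m x^t*) 0 0 =
  \sum_k d 0 k * ((x *m P^t*) 0 k * ((x *m P^t*) 0 k)^*).
Proof.
rewrite [in LHS]SCE !mulmxA -[x *m P^t* *m diag_mx d *m P *m x^t*]mulmxA -ctP.
rewrite mul_mx_diag mxE; apply: eq_bigr => k _; rewrite !mxE.
by rewrite mulrCA mulrA.
Qed.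

Lemma ray_norm (x : 'rV[C]_N) : (x *m x^t*) 0 0 =
  \sum_k ((x *m P^t*) 0 k * ((x *m P^t*) 0 k)^*).
Proof.
rewrite -entry_conj; congr (_ 0 0).
by rewrite ctP mulmxA -(mulmxA x) PtP mulmx1.
Qed.


Lemma decompC (x : 'rV[C]_N) :
  x = map_mx toC (map_mx (@complex.Re R) x) + 'i *: map_mx toC (map_mx (@complex.Im R) x).
Proof. by apply/rowP => k; rewrite !mxE -complexiE -complexE. Qed.

Lemma decompCt (x : 'rV[C]_N) :
  x^t* = (map_mx toC (map_mx (@complex.Re R) x))^T - 'i *: (map_mx toC (map_mx (@complex.Im R) x))^T.
Proof.
apply/matrixP => k l; rewrite !mxE.
by case: (x l k) => a b /=; rewrite -complexiE; simpc.
Qed.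


Lemma split_quad (Q : 'M[R]_N) : Q^T = Q -> forall x : 'rV[C]_N,
  (x *m map_mx toC Q *m x^t*) 0 0 =
  toC ((map_mx (@complex.Re R) x *m Q *m (map_mx (@complex.Re R) x)^T) 0 0 +
       (map_mx (@complex.Im R) x *m Q *m (map_mx (@complex.Im R) x)^T) 0 0).
Proof.
move=> hQ x; rewrite decompCt {1}[x]decompC.
set a := map_mx _ x; set b := map_mx _ x.
have key : forall (y z : 'rV[R]_N), (map_mx toC y *m map_mx toC Q *m (map_mx toC z)^T) 0 0
   = toC ((y *m Q *m z^T) 0 0) by move=> y z; rewrite map_trmx -!map_mxM mxE.
have sym : (b *m Q *m a^T) 0 0 = (a *m Q *m b^T) 0 0.
  have : (b *m Q *m a^T)^T = a *m Q *m b^T by rewrite !trmx_mul trmxK hQ mulmxA.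
  by move/(congr1 (fun M : 'M[R]_1 => M 0 0)); rewrite mxE.
have keyM : forall (y z : 'rV[R]_N), map_mx toC y *m map_mx toC Q *m (map_mx toC z)^T
   = map_mx toC (y *m Q *m z^T) by move=> y z; rewrite map_trmx -!map_mxM.
rewrite !mulmxDl !mulmxBr -!scalemxAl -!scalemxAr !keyM.
have sym' := sym; rewrite !mxE in sym'.
rewrite !mxE sym' rmorphD mulrA -expr2 sqrCi mulN1r opprK.
by rewrite addrA subrK.
Qed.


Lemma split_orth (u : 'rV[R]_N) (x : 'rV[C]_N) :
  (x *m (map_mx toC u)^T) 0 0 = 0 ->
  (map_mx (@complex.Re R) x *m u^T) 0 0 = 0 /\ (map_mx (@complex.Im R) x *m u^T) 0 0 = 0.
Proof.
rewrite {1}[x]decompC mulmxDl -scalemxAl map_trmx -!map_mxM !mxE.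
rewrite -complexiE; simpc.
by case=> -> ->.
Qed.

Lemma norm_as_quad (x : 'rV[C]_N) : x *m x^t* = x *m map_mx toC 1%:M *m x^t*.
Proof. by rewrite map_scalar_mx /= rmorph1 mulmx1. Qed.

Lemma ext_bound (Q : 'M[R]_N) (u : 'rV[R]_N) (k : R) : Q^T = Q ->
  (forall y : 'rV[R]_N, (y *m u^T) 0 0 = 0 ->
      (y *m Q *m y^T) 0 0 <= k * (y *m y^T) 0 0) ->
  forall x : 'rV[C]_N, (x *m (map_mx toC u)^T) 0 0 = 0 ->
    (x *m map_mx toC Q *m x^t*) 0 0 <= toC k * (x *m x^t*) 0 0.
Proof.
move=> hQ hb x /split_orth [ha hb'].
rewrite norm_as_quad !split_quad ?trmx1 // -rmorphM lecR !mulmx1 mulrDr.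
by apply: lerD; apply: hb.
Qed.


Lemma count_enum_card (P' : pred 'I_N) : count P' (enum 'I_N) = #|P'|.
Proof.
by rewrite -size_filter /enum_mem /= cardE /enum_mem /= -filter_predI;
  apply: congr1; apply: eq_filter => z; rewrite !inE andbT.
Qed.

Lemma ray_inner (x z : 'rV[C]_N) : (x *m z^t*) 0 0 =
  \sum_k ((x *m P^t*) 0 k * ((z *m P^t*) 0 k)^*).
Proof.
rewrite -entry_conj; congr (_ 0 0).
by rewrite ctP mulmxA -(mulmxA x) PtP mulmx1.
Qed.

Lemma eP_coord (j : 'I_N) : row j P *m P^t* = row j 1%:M.
Proof. by rewrite -row_mul PPt. Qed.

Lemma size_t (t : seq R) : char_poly S = \prod_(y <- t) ('X - y%:P) -> size t = N.
Proof. by move=> cS; have := size_char_poly S; rewrite cS size_prod_XsubC => -[]. Qed.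

Lemma d_real (t : seq R) : char_poly S = \prod_(y <- t) ('X - y%:P) ->
  forall k, exists2 z, z \in t & d 0 k = toC z.
Proof.
move=> cS k; have := perm_mem (perm_d cS) (d 0 k).
rewrite map_f ?mem_enum // => /esym /mapP [z zt ->]; by exists z.
Qed.

Lemma mul_conj_ge0' (z : C) : 0 <= z * z^*.
Proof. exact: mul_conjC_ge0. Qed.

Lemma ray_lower (x : 'rV[C]_N) (b : C) :
  (forall k, (x *m P^t*) 0 k != 0 -> b <= d 0 k) ->
  b * (x *m x^t*) 0 0 <= (x *m SC *m x^t*) 0 0.
Proof.
move=> h; rewrite ray_norm ray_quad mulr_sumr; apply: ler_sum => k _.
have [->|nz] := eqVneq ((x *m P^t*) 0 k) 0; first by rewrite !mul0r !mulr0.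
by apply: ler_wpM2r; [exact: mul_conjC_ge0 | exact: h].
Qed.

Lemma ray_upper (x : 'rV[C]_N) (b : C) :
  (forall k, (x *m P^t*) 0 k != 0 -> d 0 k <= b) ->
  (x *m SC *m x^t*) 0 0 <= b * (x *m x^t*) 0 0.
Proof.
move=> h; rewrite ray_norm ray_quad mulr_sumr; apply: ler_sum => k _.
have [->|nz] := eqVneq ((x *m P^t*) 0 k) 0; first by rewrite !mul0r !mulr0.
by apply: ler_wpM2r; [exact: mul_conjC_ge0 | exact: h].
Qed.


Lemma nrm_gt0 (x : 'rV[C]_N) k : (x *m P^t*) 0 k != 0 -> 0 < (x *m x^t*) 0 0.
Proof.
move=> nz; rewrite ray_norm lt_def; apply/andP; split; last first.
  by apply: sumr_ge0 => j _; exact: mul_conjC_ge0.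
apply/eqP => hs.
have := psumr_eq0P (fun j _ => mul_conjC_ge0 ((x *m P^t*) 0 j)) hs (i := k).
by move=> /(_ isT) /eqP; rewrite mul_conjC_eq0 (negbTE nz).
Qed.

Lemma entry_lin (A B : 'M[C]_1) (a b : C) : (a *: A + b *: B) 0 0 = a * A 0 0 + b * B 0 0.
Proof. by rewrite !mxE. Qed.

Lemma L2core (t : seq R) (u : 'rV[R]_N) (k : R) :
  char_poly S = \prod_(y <- t) ('X - y%:P) -> sorted (fun x y => y <= x) t ->
  0 <= k ->
  (forall y : 'rV[R]_N, (y *m u^T) 0 0 = 0 ->
      (y *m S *m y^T) 0 0 <= k * (y *m y^T) 0 0) ->
  t`_1 <= k.
Proof.
move=> cS st k0 hb.
case: t cS st => [|a [|b r]] cS st //=; try by rewrite nth_nil.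
have ba : b <= a by move: st => /= /andP[].
have : (1 < #|[pred j : 'I_N | (toC b <= d 0 j)%R]|)%N.
  rewrite -count_enum_card -(count_map (fun j => d 0 j) (fun z => toC b <= z)).
  rewrite ((seq.permP (perm_d cS)) (fun z => toC b <= z)) /= !lecR ba lexx.
  by rewrite add1n addSn ltnS ltnS leq_addr.
move=> /card_gt1P [k0' [k1 [hk0 hk1 nk]]]; rewrite !inE in hk0 hk1.
pose uC := map_mx toC u.
pose al j := (row j P *m uC^T) 0 0.
have [be0 [be1 [nzb horth]]] : exists be0 be1 : C,
    [/\ (be0 != 0) || (be1 != 0) & be0 * al k0' + be1 * al k1 = 0].
  have [z0|nz0] := eqVneq (al k0') 0.
    by exists 1, 0; rewrite oner_eq0 z0 mulr0 mul0r addr0.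
  exists (al k1), (- al k0'); split; first by rewrite oppr_eq0 nz0 orbT.
  by rewrite mulrC mulNr subrr.
pose x := be0 *: row k0' P + be1 *: row k1 P.
have cx : x *m P^t* = be0 *: row k0' 1%:M + be1 *: row k1 1%:M.
  by rewrite mulmxDl -!scalemxAl !eP_coord.
have xo : (x *m uC^T) 0 0 = 0.
  by rewrite mulmxDl -!scalemxAl entry_lin.
have cE : forall l, (x *m P^t*) 0 l = be0 * (k0' == l)%:R + be1 * (k1 == l)%:R.
  by move=> l; rewrite cx !mxE.
have cnz : forall l, (x *m P^t*) 0 l != 0 -> toC b <= d 0 l.
  move=> l; case: (eqVneq l k0') => [->//|nl0]; case: (eqVneq l k1) => [->//|nl1].
  have h0 : (k0' == l) = false by rewrite eq_sym; exact: negbTE.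
  have h1 : (k1 == l) = false by rewrite eq_sym; exact: negbTE.
  by rewrite cE h0 h1 !mulr0 addr0 eqxx.
have [l nzl] : exists l, (x *m P^t*) 0 l != 0.
  have h10 : (k1 == k0') = false by rewrite eq_sym; exact: negbTE.
  have h01 : (k0' == k1) = false by exact: negbTE.
  case/orP: nzb => nzb.
    by exists k0'; rewrite cE eqxx h10 mulr0 addr0 mulr1.
  by exists k1; rewrite cE eqxx h01 mulr0 add0r mulr1.
have lo := ray_lower cnz.
have up := ext_bound Ssym hb xo.
have pos := nrm_gt0 nzl.
by have := le_trans lo up; rewrite ler_pM2r // lecR.
Qed.


Lemma sorted_count (t : seq R) : sorted (fun x y => y <= x) t ->
  (count (fun w => (t`_1 < w)%R) t <= 1)%N.
Proof.
case: t => [|a [|b r]] //=; first by rewrite addn0 leq_b1.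
move=> /andP [_ pr].
have hall : all (fun w => w <= b) r.
  by apply: (order_path_min (leT := fun x y => y <= x)) pr => x y z h1 h2; exact: le_trans h2 h1.
rewrite ltxx add0n (eq_in_count (a2 := pred0)) ?count_pred0 ?addn0 ?leq_b1 //.
by move=> w /(allP hall) wb /=; rewrite ltNge wb.
Qed.

Lemma real_conj (y : 'rV[R]_N) : (map_mx toC y)^t* = map_mx toC y^T.
Proof. by apply/matrixP => i j; rewrite !mxE; apply: conjc_real. Qed.

Lemma L1core (t : seq R) (u : 'rV[R]_N) :
  char_poly S = \prod_(y <- t) ('X - y%:P) -> sorted (fun x y => y <= x) t ->
  u != 0 -> u *m S = u ->
  (forall y : 'rV[R]_N, (y *m (0 : 'rV[R]_N)^T) 0 0 = 0 ->
      (y *m S *m y^T) 0 0 <= 1 * (y *m y^T) 0 0) ->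
  forall y : 'rV[R]_N, (y *m u^T) 0 0 = 0 ->
    (y *m S *m y^T) 0 0 <= t`_1 * (y *m y^T) 0 0.
Proof.
move=> cS st unz uS hb y yo.
pose yC := map_mx toC y; pose uC := map_mx toC u.
have realq : forall (Q : 'M[R]_N) (z : 'rV[R]_N),
    (map_mx toC z *m map_mx toC Q *m (map_mx toC z)^t*) 0 0 = toC ((z *m Q *m z^T) 0 0).
  by move=> Q z; rewrite real_conj -!map_mxM mxE.
have realn : forall (z w : 'rV[R]_N),
    (map_mx toC z *m (map_mx toC w)^t*) 0 0 = toC ((z *m w^T) 0 0).
  by move=> z w; rewrite real_conj -!map_mxM mxE.
suff claim : forall l, (yC *m P^t*) 0 l != 0 -> d 0 l <= toC (t`_1).
  have := ray_upper claim; rewrite realq norm_as_quad realq mulmx1 -rmorphM lecR.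
  done.
move=> l nzl; have [z zt dlz] := d_real cS l; rewrite dlz lecR.
rewrite leNgt; apply/negP => t1z.
have others : forall j, j != l -> exists2 zj, d 0 j = toC zj & zj <= t`_1.
  move=> j njl; have [zj _ djz] := d_real cS j; exists zj => //.
  rewrite leNgt; apply/negP => t1zj.
  have : (1 < #|[pred k : 'I_N | (toC (t`_1) < d 0 k)%R]|)%N.
    apply/card_gt1P; exists j, l; rewrite !inE djz dlz !ltcR t1zj t1z.
    by [].
  rewrite -count_enum_card -(count_map (fun k => d 0 k) (fun w => toC (t`_1) < w)).
  rewrite ((seq.permP (perm_d cS)) (fun w => toC (t`_1) < w)) count_map.
  rewrite (eq_count (a2 := fun w => (t`_1 < w)%R)); last by move=> w /=; rewrite ltcR.
  by rewrite ltnNge sorted_count.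
have dl1 : z <= 1.
  pose e := row l P.
  have ce : forall k, (e *m P^t*) 0 k = (l == k)%:R by move=> k; rewrite eP_coord !mxE.
  have c1 : (e *m P^t*) 0 l != 0 by rewrite ce eqxx oner_eq0.
  have lo : d 0 l * (e *m e^t*) 0 0 <= (e *m SC *m e^t*) 0 0.
    apply: ray_lower => k; rewrite ce; case: (eqVneq l k) => [->//|].
    by rewrite eqxx.
  have e0 : (e *m (map_mx toC (0 : 'rV[R]_N))^T) 0 0 = 0.
    by rewrite map_mx0 trmx0 mulmx0 mxE.
  have up := ext_bound Ssym hb e0.
  have pos := nrm_gt0 c1.
  by have := le_trans lo up; rewrite dlz ler_pM2r // lecR.
  pose c' := uC *m P^t*.
have uSC : uC *m SC = uC by rewrite -map_mxM uS.
have cD : forall j, c' 0 j * d 0 j = c' 0 j.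
  have cDm : c' *m diag_mx d = c'.
    rewrite /c' -[uC *m P^t* *m diag_mx d]mulmx1 -PPt !mulmxA.
    by rewrite -(mulmxA uC) -(mulmxA uC) -SCE uSC.
  by move=> j; have := congr1 (fun M : 'rV[C]_N => M 0 j) cDm; rewrite /= mul_mx_diag mxE.
have c'0 : forall j, j != l -> c' 0 j = 0.
  move=> j njl; have [zj dj zjt] := others j njl.
  have : c' 0 j * (d 0 j - 1) = 0 by rewrite mulrBr mulr1 cD subrr.
  move/eqP; rewrite mulf_eq0 => /orP [/eqP//|]; rewrite dj subr_eq0 => /eqP hz.
  have zj1 : zj = 1 by apply: (@complexI R); rewrite hz.
  by move: (lt_le_trans (le_lt_trans zjt t1z) dl1); rewrite zj1 ltxx.
have c'l : c' 0 l != 0.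
  apply/negP => /eqP h.
  have c'z : c' = 0.
    apply/rowP => j; case: (eqVneq j l) => [->|njl]; first by rewrite h [RHS]mxE.
    by rewrite c'0 // [RHS]mxE.
  move: unz; have : uC = 0 by rewrite -(cPK uC) -/c' c'z mul0mx.
  by rewrite /uC => /eqP; rewrite map_mx_eq0 => ->.
have inner : (yC *m uC^t*) 0 0 = 0 by rewrite realn yo rmorph0.
rewrite ray_inner (bigD1 l) //= big1 ?addr0 in inner; last first.
  by move=> j njl; rewrite -/c' c'0 // conjC0 mulr0.
by move: inner => /eqP; rewrite mulf_eq0 conjC_eq0 (negbTE nzl) (negbTE c'l).
Qed.

End Spec.
Section Bridge.
Variable R : rcfType.
Variable T : finType.

Definition app (f : T -> T -> R) (x : T -> R) (t : T) : R := \sum_y f t y * x y.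
Definition nrm2 (x : T -> R) : R := \sum_t x t ^+ 2.

Lemma sum_ord_T (F : 'I_#|T| -> R) : \sum_i F i = \sum_t F (enum_rank t).
Proof.
rewrite (reindex enum_rank) //; exists enum_val => i _; [exact: enum_rankK | exact: enum_valK].
Qed.

Local Notation rowv y := (fun t => y 0 (enum_rank t)).

Lemma bridge_quad (f : T -> T -> R) (y : 'rV[R]_#|T|) :
  (y *m ((mx_of f)^T *m mx_of f) *m y^T) 0 0 = nrm2 (app f (rowv y)).
Proof.
have -> : y *m ((mx_of f)^T *m mx_of f) *m y^T =
    (y *m (mx_of f)^T) *m (y *m (mx_of f)^T)^T by rewrite trmx_mul trmxK !mulmxA.
rewrite mxE /nrm2 sum_ord_T.
apply: eq_bigr => t _; rewrite !mxE expr2; congr (_ * _);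
  rewrite /app sum_ord_T; apply: eq_bigr => z _; rewrite !mxE !enum_rankK mulrC //.
Qed.


Lemma bridge_norm (y : 'rV[R]_#|T|) : (y *m y^T) 0 0 = nrm2 (rowv y).
Proof. by rewrite mxE /nrm2 sum_ord_T; apply: eq_bigr => t _; rewrite !mxE expr2. Qed.

Lemma bridge_sum (y : 'rV[R]_#|T|) :
  (y *m (const_mx 1 : 'rV[R]_#|T|)^T) 0 0 = \sum_t rowv y t.
Proof. by rewrite mxE sum_ord_T; apply: eq_bigr => t _; rewrite !mxE mulr1. Qed.

Lemma rowvK (x : T -> R) t : rowv (\row_k x (enum_val k)) t = x t.
Proof. by rewrite /= mxE enum_rankK. Qed.

Lemma nrm2_eq (x x' : T -> R) : (forall t, x t = x' t) -> nrm2 x = nrm2 x'.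
Proof. by move=> h; apply: eq_bigr => t _; rewrite h. Qed.

Lemma app_eq f (x x' : T -> R) t : (forall t, x t = x' t) -> app f x t = app f x' t.
Proof. by move=> h; apply: eq_bigr => z _; rewrite h. Qed.

Lemma sorted_sq (s : seq R) : sorted (fun x y => y <= x) s -> all (fun x => 0 <= x) s ->
  sorted (fun x y => y <= x) [seq x ^+ 2 | x <- s].
Proof.
move=> ss s0; apply: (homo_sorted_in (P := fun x => 0 <= x)) ss.
  move=> x y x0 y0 /= yx; rewrite ler_pXn2r //; by rewrite nnegrE.
exact: s0.
Qed.

Lemma nth1_sq (s : seq R) : [seq x ^+ 2 | x <- s]`_1 = s`_1 ^+ 2.
Proof. by case: s => [|a [|b r]] //=; rewrite expr0n. Qed.


Lemma sym_AtA (f : T -> T -> R) : ((mx_of f)^T *m mx_of f)^T = (mx_of f)^T *m mx_of f.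
Proof. by rewrite trmx_mul trmxK. Qed.

Lemma FL2 (f : T -> T -> R) (s : seq R) (k : R) :
  singular_values (mx_of f) s -> 0 <= k ->
  (forall x : T -> R, \sum_t x t = 0 -> nrm2 (app f x) <= k ^+ 2 * nrm2 x) ->
  s`_1 <= k.
Proof.
move=> [ss s0 cs] k0 h.
have cS : char_poly ((mx_of f)^T *m mx_of f) = \prod_(y <- [seq x ^+ 2 | x <- s]) ('X - y%:P).
  by rewrite big_map.
have := L2core (sym_AtA f) (u := const_mx 1) (k := k ^+ 2) cS (sorted_sq ss s0)
  (exprn_ge0 _ k0).
rewrite nth1_sq => /(_ _) H.
have s10 : 0 <= s`_1.
  case: (ltnP 1 (size s)) => hs; last by rewrite nth_default.
  by apply: (allP s0); rewrite mem_nth.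
rewrite -(ler_pXn2r (n := 2)) ?nnegrE //; apply: H => y.
by rewrite bridge_sum bridge_quad bridge_norm; apply: h.
Qed.


Lemma FL1 (f : T -> T -> R) (s : seq R) :
  singular_values (mx_of f) s ->
  (forall t, \sum_y f t y = 1) -> (forall y, \sum_t f t y = 1) ->
  (forall x : T -> R, nrm2 (app f x) <= nrm2 x) ->
  forall x : T -> R, \sum_t x t = 0 -> nrm2 (app f x) <= s`_1 ^+ 2 * nrm2 x.
Proof.
move=> [ss s0 cs] hr hc hb x hx.
case: (pickP (fun _ : T => true)) => [t0 _|hT]; last first.
  by rewrite /nrm2 big_pred0 ?mul0r ?big_pred0 ?mulr0 // => t; rewrite hT.
have cS : char_poly ((mx_of f)^T *m mx_of f) = \prod_(y <- [seq x ^+ 2 | x <- s]) ('X - y%:P).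
  by rewrite big_map.
pose u := (const_mx 1 : 'rV[R]_#|T|).
have unz : u != 0.
  apply/negP => /eqP /rowP /(_ (enum_rank t0)); rewrite !mxE => /eqP.
  by rewrite oner_eq0.
have uS : u *m ((mx_of f)^T *m mx_of f) = u.
  have uA : u *m (mx_of f)^T = u.
    apply/rowP => i; rewrite !mxE -[RHS](hr (enum_val i)) sum_ord_T.
    by apply: eq_bigr => t _; rewrite !mxE enum_rankK mul1r.
  rewrite mulmxA uA; apply/rowP => j; rewrite !mxE -[RHS](hc (enum_val j)) sum_ord_T.
  by apply: eq_bigr => t _; rewrite !mxE enum_rankK mul1r.
have := L1core (sym_AtA f) cS (sorted_sq ss s0) unz uS.
move=> /(_ _ (\row_k x (enum_val k))).
rewrite nth1_sq bridge_quad bridge_norm bridge_sum.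
rewrite (nrm2_eq (rowvK x)) (nrm2_eq (fun t => app_eq f t (rowvK x))).
move=> H; apply: H.
  by move=> y _; rewrite bridge_quad bridge_norm mul1r.
by rewrite -[RHS]hx; apply: eq_bigr => t _; rewrite rowvK.
Qed.


Lemma jensen_w (w x : T -> R) : (forall y, 0 <= w y) -> \sum_y w y = 1 ->
  (\sum_y w y * x y) ^+ 2 <= \sum_y w y * x y ^+ 2.
Proof.
move=> w0 w1; set m := \sum_y w y * x y.
have h : 0 <= \sum_y w y * (x y - m) ^+ 2.
  by apply: sumr_ge0 => y _; rewrite mulr_ge0 ?sqr_ge0.
have e1 : \sum_y w y * (x y - m) ^+ 2 = \sum_y (w y * x y ^+ 2) +
    \sum_y (- (2 * m) * (w y * x y)) + \sum_y (m ^+ 2 * w y).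
  by rewrite -!big_split /=; apply: eq_bigr => y _; ring.
rewrite -!mulr_sumr -/m w1 in e1.
rewrite e1 in h; nra.
Qed.

Lemma stoch_contract (f : T -> T -> R) : (forall t y, 0 <= f t y) ->
  (forall t, \sum_y f t y = 1) -> (forall y, \sum_t f t y = 1) ->
  forall x, nrm2 (app f x) <= nrm2 x.
Proof.
move=> f0 hr hc x; rewrite /nrm2 /app.
apply: le_trans (_ : \sum_t \sum_y f t y * x y ^+ 2 <= _).
  by apply: ler_sum => t _; apply: jensen_w.
rewrite exchange_big /=; apply: ler_sum => y _.
by rewrite -mulr_suml hc mul1r.
Qed.

End Bridge.

Section Zig.
Variable R : rcfType.
Variables (n d' s d2 : nat).
Local Notation d1 := d'.+1.
Variable rot : 'I_n * 'I_d1 -> 'I_n * 'I_d1.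
Hypothesis rotK : forall vj, rot (rot vj) = vj.
Variable E : Hvert d1 s -> Hvert d1 s -> nat.
Hypothesis Esym : forall a b, E a b = E b a.
Hypothesis Ereg : forall a, (\sum_b E a b)%N = d2.
Hypothesis d2pos : (0 < d2)%N.
Variable i : 'I_s.
Local Notation W := (Hvert d1 s).
Local Notation V := 'I_n.
Local Notation T := ('I_n * Hvert d1 s)%type.
Local Notation aH := (adjH R d2 E).
Local Notation aG := (adjG R rot).
Local Notation Ik := (IkronH R d2 E).
Local Notation Gm := (Gi R rot i).
Local Notation Rt := (Rot rot i).

Lemma Rot_inv t : Rt (Rt t) = t.
Proof.
case: t => v a; rewrite /Rot /= ffunE eqxx -surjective_pairing rotK /=.
congr (_, _); apply/ffunP => k; rewrite !ffunE; case: eqP => [->|] //.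
Qed.

Lemma app_Gm (z : T -> R) t : app Gm z t = z (Rt t).
Proof.
rewrite /app (bigD1 (Rt t)) //= big1 ?addr0 /Gi ?eqxx ?mul1r //.
by move=> y ny; rewrite eq_sym (negbTE ny) mul0r.
Qed.

Lemma sum_T (F : T -> R) : \sum_t F t = \sum_v \sum_w F (v, w).
Proof. by rewrite pair_big /=; apply: eq_bigr => -[]. Qed.

Lemma app_Ik (z : T -> R) v w : app Ik z (v, w) = \sum_w' aH w w' * z (v, w').
Proof.
rewrite /app sum_T (bigD1 v) //= [X in _ + X]big1 ?addr0.
  by apply: eq_bigr => w' _; rewrite /IkronH /= eqxx mul1r.
by move=> v' nv; apply: big1 => w' _; rewrite /IkronH /= eq_sym (negbTE nv) !mul0r.
Qed.

Lemma app_zz (x : T -> R) t :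
  app (zigzag_i R d2 rot E i) x t = app Ik (app Gm (app Ik x)) t.
Proof.
rewrite /app /zigzag_i.
under eq_bigr do rewrite big_distrl /=.
under [RHS]eq_bigr do rewrite big_distrr /=.
rewrite exchange_big; apply: eq_bigr => z _.
under eq_bigr do rewrite big_distrl /=.
under [RHS]eq_bigr do rewrite mulrA big_distrr /=.
rewrite exchange_big; apply: eq_bigr => w _.
by under [RHS]eq_bigr do rewrite mulrA.
Qed.


Local Notation K := (#|{: W}|%:R : R).

Lemma Kpos : 0 < K.
Proof. by rewrite ltr0n; apply/card_gt0P; exists [ffun _ => ord0]. Qed.

Lemma Kneq0 : K != 0.
Proof. by rewrite gt_eqF // Kpos. Qed.

Definition mean (x : T -> R) (v : V) : R := (\sum_w x (v, w)) / K.

Lemma aH_ge0 a b : 0 <= aH a b.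
Proof. by rewrite /adjH divr_ge0 ?ler0n. Qed.

Lemma aH_row a : \sum_b aH a b = 1.
Proof.
rewrite /adjH -mulr_suml -natr_sum Ereg divff // pnatr_eq0 -lt0n //.
Qed.

Lemma aH_col b : \sum_a aH a b = 1.
Proof. by rewrite -(aH_row b); apply: eq_bigr => a _; rewrite /adjH Esym. Qed.

Lemma nrm2_T (z : T -> R) : nrm2 z = \sum_v nrm2 (fun w => z (v, w)).
Proof. by rewrite /nrm2 sum_T. Qed.

Lemma nrm2_Ik (z : T -> R) :
  nrm2 (app Ik z) = \sum_v nrm2 (app aH (fun w => z (v, w))).
Proof. by rewrite nrm2_T; apply: eq_bigr => v _; apply: eq_bigr => w _; rewrite app_Ik. Qed.

Lemma Ik_par (x : T -> R) t : app Ik (fun t : T => mean x t.1) t = mean x t.1.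
Proof. by case: t => v w; rewrite app_Ik /= -mulr_suml aH_row mul1r. Qed.

Lemma mean_Ik (z : T -> R) v : mean (app Ik z) v = mean z v.
Proof.
rewrite /mean; congr (_ / _).
under eq_bigr do rewrite app_Ik.
rewrite exchange_big /=; apply: eq_bigr => w' _.
by rewrite -mulr_suml aH_col mul1r.
Qed.

Lemma sum_const_W (c : R) : \sum_(w : W) c = c * K.
Proof. by rewrite sumr_const mulr_natr. Qed.

Lemma perp_sum (x : T -> R) v : \sum_w (x (v, w) - mean x v) = 0.
Proof.
by rewrite sumrB sum_const_W /mean mulfVK ?Kneq0 // subrr.
Qed.

Lemma nrm2_split (x : T -> R) :
  nrm2 x = nrm2 (fun t : T => mean x t.1) + nrm2 (fun t : T => x t - mean x t.1).
Proof.
rewrite !nrm2_T -big_split /=; apply: eq_bigr => v _.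
rewrite /nrm2 -big_split /=.
have e : \sum_w x (v, w) ^+ 2 = \sum_w (mean x v ^+ 2 + (x (v, w) - mean x v) ^+ 2 +
   2 * mean x v * (x (v, w) - mean x v)).
  by apply: eq_bigr => w _; ring.
by rewrite e big_split /= -mulr_sumr perp_sum mulr0 addr0.
Qed.


Variable lam : R.
Hypothesis lam0 : 0 <= lam.
Hypothesis HB : forall y : W -> R, \sum_w y w = 0 -> nrm2 (app aH y) <= lam ^+ 2 * nrm2 y.
Hypothesis GB : forall c : V -> R, \sum_v c v = 0 -> nrm2 (app aG c) <= lam ^+ 2 * nrm2 c.

Lemma Ik_perp_bound (z : T -> R) : (forall v, \sum_w z (v, w) = 0) ->
  nrm2 (app Ik z) <= lam ^+ 2 * nrm2 z.
Proof.
move=> hz; rewrite nrm2_Ik nrm2_T mulr_sumr; apply: ler_sum => v _.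
exact: HB.
Qed.

Lemma Ik_contract (z : T -> R) : nrm2 (app Ik z) <= nrm2 z.
Proof.
rewrite nrm2_Ik nrm2_T; apply: ler_sum => v _.
apply: stoch_contract; [exact: aH_ge0 | exact: aH_row | exact: aH_col].
Qed.

Lemma Gm_norm (z : T -> R) : nrm2 (app Gm z) = nrm2 z.
Proof.
rewrite /nrm2; under eq_bigr do rewrite app_Gm.
by rewrite [RHS](reindex_inj (can_inj Rot_inv)).
Qed.

Lemma nrm2_ge0' (z : T -> R) : 0 <= nrm2 z.
Proof. by apply: sumr_ge0 => t _; rewrite sqr_ge0. Qed.

Lemma Ik_bound (w : T -> R) :
  nrm2 (app Ik w) <= nrm2 (fun t : T => mean w t.1) + lam ^+ 2 * nrm2 w.
Proof.
rewrite nrm2_split.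
have e1 : forall t : T, mean (app Ik w) t.1 = mean w t.1 by move=> t; rewrite mean_Ik.
have e2 : forall t, app Ik w t - mean (app Ik w) t.1 =
    app Ik (fun t : T => w t - mean w t.1) t.
  move=> t; rewrite mean_Ik /app -Ik_par /app -sumrB; apply: eq_bigr => y _.
  by rewrite mulrBr.
rewrite (nrm2_eq e1) (nrm2_eq e2) lerD2l.
apply: le_trans (Ik_perp_bound _) _; first by move=> v; exact: perp_sum.
rewrite ler_wpM2l ?exprn_ge0 // [X in _ <= X]nrm2_split lerDr.
exact: nrm2_ge0'.
Qed.


Lemma sum_ffun_coord (h : 'I_d1 -> R) :
  \sum_(w : W) h (w i) * d1%:R = K * \sum_j h j.
Proof.
have sh : forall r : 'I_d1, \sum_(w : W) h (w i) = \sum_(w : W) h (w i + r).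
  move=> r.
  have shinj : injective (fun w : W => [ffun k => w k + r] : W).
    move=> w1 w2 /ffunP e; apply/ffunP => k; have := e k; rewrite !ffunE.
    exact: addIr.
  rewrite [LHS](reindex_inj shinj) /=; apply: eq_bigr => w _; by rewrite ffunE.
have -> : \sum_(w : W) h (w i) * d1%:R = \sum_(r : 'I_d1) \sum_(w : W) h (w i + r).
  rewrite -mulr_suml mulr_natr -[in X in _ *+ X](card_ord d1) -sumr_const.
  by apply: eq_bigr => r _; exact: sh.
rewrite exchange_big /= mulrC -sum_const_W; apply: eq_bigr => w _.
by rewrite [RHS](reindex_inj (addrI (w i))).
Qed.


Lemma card_set_sum (P : pred 'I_d1) : (#|[set j | P j]|%:R : R) = \sum_j (P j)%:R.
Proof.
rewrite -sum1_card natr_sum big_mkcond /=; apply: eq_bigr => j _.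
by rewrite inE; case: (P j).
Qed.

Lemma sum_ind (a : V) (F : V -> R) : \sum_v' ((a == v')%:R * F v') = F a.
Proof.
rewrite (bigD1 a) //= eqxx mul1r big1 ?addr0 // => v' nv.
by rewrite eq_sym (negbTE nv) mul0r.
Qed.

Lemma aG_app (c : V -> R) v : app aG c v = (\sum_j c ((rot (v, j)).1)) / d1%:R.
Proof.
rewrite /app /adjG.
under eq_bigr do rewrite card_set_sum mulrAC.
rewrite -mulr_suml; congr (_ / _).
under eq_bigr do rewrite mulr_suml.
rewrite exchange_big /=; apply: eq_bigr => j _.
exact: sum_ind.
Qed.

Lemma sum_ind1 (a : V) : \sum_v' ((a == v')%:R : R) = 1.
Proof.
rewrite (bigD1 a) //= eqxx big1 ?addr0 // => v' nv.
by rewrite eq_sym (negbTE nv).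
Qed.

Lemma aG_ge0 v v' : 0 <= aG v v'.
Proof. by rewrite /adjG divr_ge0 ?ler0n. Qed.

Lemma aG_row v : \sum_v' aG v v' = 1.
Proof.
rewrite /adjG -mulr_suml.
under eq_bigr do rewrite card_set_sum.
rewrite exchange_big /=.
under eq_bigr do rewrite sum_ind1.
by rewrite sumr_const card_ord divff // pnatr_eq0.
Qed.

Lemma aG_col v' : \sum_v aG v v' = 1.
Proof.
rewrite /adjG -mulr_suml.
under eq_bigr do rewrite card_set_sum.
rewrite pair_big /=.
under eq_bigr => p _ do rewrite -surjective_pairing.
have h1 : \sum_p (((rot p).1 == v')%:R : R) = \sum_(p : V * 'I_d1) ((p.1 == v')%:R : R).
  exact: (esym (reindex_inj (can_inj rotK) (P := xpredT)
     (F := fun q : V * 'I_d1 => ((q.1 == v')%:R : R)))).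
have h2 : \sum_(p : V * 'I_d1) ((p.1 == v')%:R : R) = \sum_(v : V) \sum_(j : 'I_d1) ((v == v')%:R : R).
  exact: (esym (pair_big predT predT (fun (v : V) (_ : 'I_d1) => ((v == v')%:R : R)))).
rewrite h1 h2.
under eq_bigr do rewrite sumr_const card_ord.
rewrite (bigD1 v') //= eqxx big1 ?addr0 ?divff ?pnatr_eq0 // => v nv.
by rewrite (negbTE nv) mul0rn.
Qed.

Lemma mean_Gm_par (c : V -> R) v : mean (app Gm (fun t : T => c t.1)) v = app aG c v.
Proof.
rewrite aG_app /mean.
under eq_bigr do rewrite app_Gm /=.
have d1n0 : (d1%:R : R) != 0 by rewrite pnatr_eq0.
have e := sum_ffun_coord (fun j => c (rot (v, j)).1).
have e' : \sum_(w : W) c (rot (v, w i)).1 = K * (\sum_j c (rot (v, j)).1) / d1%:R.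
  by rewrite -e -mulr_suml mulfK.
rewrite e'; field.
by rewrite nat1r d1n0 Kneq0.
Qed.


Lemma nrm2_lift (q : V -> R) : nrm2 (fun t : T => q t.1) = K * nrm2 q.
Proof.
rewrite nrm2_T /nrm2 mulr_sumr; apply: eq_bigr => v _ /=.
by rewrite sum_const_W mulrC.
Qed.

Lemma Gbound_par (c : V -> R) : \sum_v c v = 0 ->
  nrm2 (fun t : T => mean (app Gm (fun t : T => c t.1)) t.1) <=
  lam ^+ 2 * nrm2 (fun t : T => c t.1).
Proof.
move=> hc; rewrite (nrm2_lift (fun v => mean (app Gm (fun t : T => c t.1)) v)).
rewrite nrm2_lift (nrm2_eq (mean_Gm_par c)) mulrCA.
by rewrite ler_wpM2l ?(ltW Kpos) //; apply: GB.
Qed.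

Lemma nrm2_add2 (a b : T -> R) :
  nrm2 (fun t => a t + b t) <= 2 * nrm2 a + 2 * nrm2 b.
Proof.
rewrite /nrm2 !mulr_sumr -big_split /=; apply: ler_sum => t _.
have := sqr_ge0 (a t - b t); set u := a t; set w := b t => h.
rewrite -subr_ge0; move: h; congr (0 <= _); ring.
Qed.

Lemma app_add (f : T -> T -> R) (a b : T -> R) t :
  app f (fun t => a t + b t) t = app f a t + app f b t.
Proof. by rewrite /app -big_split /=; apply: eq_bigr => y _; rewrite mulrDr. Qed.

Theorem main_bound (x : T -> R) : \sum_t x t = 0 ->
  nrm2 (app (zigzag_i R d2 rot E i) x) <= (2 * lam) ^+ 2 * nrm2 x.
Proof.
move=> hx.
pose p := fun t : T => mean x t.1.
pose r := fun t : T => x t - mean x t.1.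
have Bx : forall t, app Ik x t = p t + app Ik r t.
  move=> t; rewrite /p -(Ik_par x t) -app_add; apply: app_eq => y.
  by rewrite subrKC.
have GBx : forall t, app Gm (app Ik x) t = app Gm p t + app Gm (app Ik r) t.
  by move=> t; rewrite !app_Gm Bx.
have e : forall t, app (zigzag_i R d2 rot E i) x t =
    app Ik (app Gm p) t + app Ik (app Gm (app Ik r)) t.
  by move=> t; rewrite app_zz -app_add; apply: app_eq.
rewrite (nrm2_eq e); apply: le_trans (nrm2_add2 _ _) _.
have b1 : nrm2 (app Ik (app Gm p)) <= lam ^+ 2 * nrm2 p + lam ^+ 2 * nrm2 p.
  apply: le_trans (Ik_bound _) _; rewrite Gm_norm lerD2r.
  have hc : \sum_v mean x v = 0.
    by rewrite /mean -mulr_suml -sum_T hx mul0r.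
  exact: (Gbound_par hc).
have b2 : nrm2 (app Ik (app Gm (app Ik r))) <= lam ^+ 2 * nrm2 r.
  apply: le_trans (Ik_contract _) _; rewrite Gm_norm.
  by apply: Ik_perp_bound => v; exact: perp_sum.
have sp := nrm2_split x.
have p0 : 0 <= nrm2 p by exact: nrm2_ge0'.
have r0 : 0 <= nrm2 r by exact: nrm2_ge0'.
rewrite sp -/p -/r.
have l0 : 0 <= lam ^+ 2 by exact: exprn_ge0.
nra.
Qed.

End Zig.

Theorem mainTheorem9 (R : rcfType) (n d1 d2 s : nat)
  (rot : 'I_n * 'I_d1 -> 'I_n * 'I_d1) (phi : {perm 'I_d1})
  (E : Hvert d1 s -> Hvert d1 s -> nat)
  (sG sH : seq R) :
  (0 < d1)%N -> (0 < d2)%N ->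
  (* rot is a rotation map: an involution, locally invertible via phi *)
  (forall vj, rot (rot vj) = vj) ->
  (forall v j, (rot (v, j)).2 = phi j) ->
  (* H is an undirected d2-regular (multi)graph on [d1]^s *)
  (forall a b, E a b = E b a) ->
  (forall a, (\sum_b E a b)%N = d2) ->
  singular_values (mx_of (adjG R rot)) sG ->
  singular_values (mx_of (adjH R d2 E)) sH ->
  sigma2_of sG <= sigma2_of sH ->
  forall i : 'I_s, forall sM : seq R,
    singular_values (mx_of (zigzag_i R d2 rot E i)) sM ->
    sigma2_of sM <= 2 * sigma2_of sH.
Proof.
move=> d1pos d2pos rotK _ Esym Ereg sgG sgH hGH i sM sgM.
destruct d1 as [|d']; first by [].
have nn : forall (l : seq R), all (fun x => 0 <= x) l -> 0 <= l`_1.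
  move=> l l0; case: (ltnP 1 (size l)) => hs; last by rewrite nth_default.
  by apply: (allP l0); rewrite mem_nth.
have lam0 : 0 <= sigma2_of sH by case: sgH => _ h _; exact: nn.
have sG0 : 0 <= sigma2_of sG by case: sgG => _ h _; exact: nn.
have Hr : forall a, \sum_b adjH R d2 E a b = 1 by move=> a; apply: aH_row.
have Hc : forall b, \sum_a adjH R d2 E a b = 1 by move=> b; apply: aH_col.
have H0 : forall a b, 0 <= adjH R d2 E a b by move=> a b; apply: aH_ge0.
have Gr : forall a, \sum_b adjG R rot a b = 1 by move=> a; apply: aG_row.
have Gc : forall b, \sum_a adjG R rot a b = 1 by move=> b; apply: aG_col.
have G0 : forall a b, 0 <= adjG R rot a b by move=> a b; apply: aG_ge0.
have HB := FL1 sgH Hr Hc (stoch_contract H0 Hr Hc).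
have GB0 := FL1 sgG Gr Gc (stoch_contract G0 Gr Gc).
have GB : forall c : 'I_n -> R, \sum_v c v = 0 ->
    nrm2 (app (adjG R rot) c) <= sigma2_of sH ^+ 2 * nrm2 c.
  move=> c hc; apply: le_trans (GB0 c hc) _.
  apply: ler_wpM2r; first by apply: sumr_ge0 => t _; exact: sqr_ge0.
  by rewrite ler_pXn2r ?nnegrE.
apply: (FL2 sgM); first by rewrite mulr_ge0 ?ler0n.
move=> x hx; apply: main_bound => //.
Qed.
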